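(* For every temporal graph with static graph $G=(V,E)$ and lifetime $T_{\max}$ and all $\delta,k$, there is an algorithm (strategy for the Discoverer) that wins the temporal graph discovery game in $|V|\,T_{\max}$ rounds.
   Context: A temporal graph $\mathcal G=(V,E,\lambda)$ with lifetime $T_{\max}$ consists of a finite undirected static graph $(V,E)$ and a labeling $\lambda:E\to\{1,\dots,T_{\max}\}$; edge $e$ is present only at time $\lambda(e)$. Infection model with parameter $\delta\in\mathbb N^+$: a set $S\subseteq V\times[0,T_{\max}]$ of seed infections is given; a seed $(u,t)$ makes $u$ infected at time $t$; otherwise a susceptible node $u$ becomes infected at time $t$ iff some neighbour $v$ infectious at time $t$ has $\lambda(uv)=t$ (exactly one infector recorded if several exist). A node infected at time $t$ is infectious at times $t+1,\dots,t+\delta$ and resistant afterwards. The infection log records triples $(u,v,t)$ ($u$ infected $v$ at time $t$; seeds as $(u,u,t)$). Temporal graph discovery game with parameters $T_{\max},\delta,k$: the Discoverer knows $V$ and $E$; each round it submits at most $k$ seed infections and the Adversary answers with an infection log consistent with the seeds under some labeling consistent with all previous answers (adaptively chosen). The Discoverer wins iff its final submitted labeling matches the Adversary's final labeling consistent with all logs, i.e. effectively iff the labeling is uniquely determined by the logs. *)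

(* Defs.v *)
From mathcomp Require Import all_boot.
Set Implicit Arguments. Unset Strict Implicit. Unset Printing Implicit Defensive.

Section TemporalGraph.
Variable V : finType.
Variable E : rel V.        (* static graph; symmetric & irreflexive assumed in theorem *)

(* A labeling: lam u v is the label of edge uv (only values on edges matter). *)
Definition labeling := V -> V -> nat.

Definition valid_labeling (Tmax : nat) (lam : labeling) : Prop :=
  forall u v, E u v -> lam u v = lam v u /\ 1 <= lam u v <= Tmax.

Definition seeds := seq (V * nat).

Definition seeded (S : seeds) (u : V) (t : nat) : bool := (u, t) \in S.

(* Given infection times (None = not yet infected), is v infectious at time t? *)
Definition infectious_at (delta : nat) (f : V -> option nat) (v : V) (t : nat) : bool :=
  if f v is Some s then (s < t) && (t <= s + delta) else false.

(* A node is infected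
   at most once (SIR), at the earliest time it is seeded or receives the
   infection from an infectious neighbour over an edge present at that time. *)
Fixpoint itime (lam : labeling) (delta : nat) (S : seeds) (t : nat) : V -> option nat :=
  match t with
  | 0 => fun u => if seeded S u 0 then Some 0 else None
  | t'.+1 => fun u =>
      match itime lam delta S t' u with
      | Some s => Some s
      | None =>
          if seeded S u t'.+1 ||
             [exists v, [&& E u v, lam u v == t'.+1 &
                            infectious_at delta (itime lam delta S t') v t'.+1]]
          then Some t'.+1 else None
      end
  end.

(* An infection log: for each node, the recorded triple (infector, time) if the
   node got infected (infector = the node itself for seeds), None otherwise.
   This encodes the set of triples (w, u, t). *)
Definition infection_log := V -> option (V * nat).

(* L is a possible log of the process with seeds S under labeling lam
   (lifetime Tmax, parameter delta); when several infectors exist, any one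
   of them may be recorded. *)
Definition valid_log (Tmax delta : nat) (lam : labeling) (S : seeds)
  (L : infection_log) : Prop :=
  forall u,
    match itime lam delta S Tmax u with
    | None => L u = None
    | Some t =>
        if seeded S u t then L u = Some (u, t)
        else exists w, L u = Some (w, t) /\ E u w /\ lam u w = t /\
                       infectious_at delta (itime lam delta S t.-1) w t
    end.

Definition strategy := seq infection_log -> seeds.
Definition guesser := seq infection_log -> labeling.

Definition admissible_seeds (Tmax k : nat) (S : seeds) : Prop :=
  size S <= k /\ forall p, p \in S -> p.2 <= Tmax.

Definition consistent_history (Tmax delta : nat) (st : strategy)
  (lam : labeling) (hs : seq infection_log) : Prop :=
  forall i, i < size hs ->
    valid_log Tmax delta lam (st (take i hs)) (nth (fun _ => None) hs i).

(* The Discoverer (st, g) wins the discovery game in R rounds: every seed set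
   it submits is admissible, and for every behaviour of the adaptive adversary
   (every history of R logs together with a final valid labeling consistent with
   all of them) the guessed labeling coincides with it on every edge. *)
Definition wins_in (Tmax delta k R : nat) (st : strategy) (g : guesser) : Prop :=
  (forall hs, admissible_seeds Tmax k (st hs)) /\
  forall (hs : seq infection_log) (lam : labeling),
    size hs = R ->
    valid_labeling Tmax lam ->
    consistent_history Tmax delta st lam hs ->
    forall u v, E u v -> g hs u v = lam u v.

End TemporalGraph.

(* Main.v *)
Require Import Defs.
From mathcomp Require Import all_boot.
From mathcomp Require Import zify.

Section Aux.
Variable V : finType.
Variable E : rel V.

Lemma itime_mono lam delta S t m x a :
  itime E lam delta S t x = Some a -> itime E lam delta S (t + m) x = Some a.
Proof.
elim: m => [|m IH]; first by rewrite addn0.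
move=> H; rewrite addnS /= IH //.
Qed.

Lemma itime_down lam delta S t x a t' :
  itime E lam delta S t x = Some a -> a <= t' -> t' <= t ->
  itime E lam delta S t' x = Some a.
Proof.
elim: t => [|t IH] /=.
  by move=> H Ha; rewrite leqn0 => /eqP ->.
case Ht: (itime E lam delta S t x) => [b|].
  case=> Eb; subst b => Hb; rewrite leq_eqVlt => /orP [/eqP -> /=|]; first by rewrite Ht.
  by rewrite ltnS => Ht'; apply: IH.
case: ifP => // Hc [Ea] Hb; subst a; rewrite leq_eqVlt => /orP [/eqP -> /=|]; first by rewrite Ht Hc.
by rewrite ltnS => Ht'; have := leq_trans Hb Ht'; rewrite ltnn.
Qed.

Lemma itime_before lam delta (u : V) s t x : t <= s ->
  itime E lam delta [:: (u, s)] t x = if (t == s) && (x == u) then Some s else None.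
Proof.
elim: t x => [|t IH] x Hts /=.
  rewrite /seeded inE xpair_eqE andbC.
  by case: (0 == s) /eqP => [<-|] //=; case: (x == u).
rewrite IH; last by apply: ltnW.
have -> : (t == s) = false by apply/negbTE; rewrite neq_ltn Hts.
rewrite /= /seeded inE xpair_eqE.
have -> : ([exists v, [&& E x v, lam x v == t.+1 &
          infectious_at delta (itime E lam delta [:: (u, s)] t) v t.+1]]) = false.
  apply/negbTE/existsPn => w; rewrite /infectious_at IH; last by apply: ltnW.
  have -> : (t == s) = false by apply/negbTE; rewrite neq_ltn Hts.
  by rewrite /= !andbF.
rewrite orbF andbC.
by case: (t.+1 == s) /eqP => [<-|] //=; case: (x == u).
Qed.

Lemma itime_next lam delta (u : V) s x : 0 < delta -> x != u ->
  itime E lam delta [:: (u, s)] s.+1 x =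
  if E x u && (lam x u == s.+1) then Some s.+1 else None.
Proof.
move=> Hd Hxu /=.
rewrite itime_before // eqxx /= (negbTE Hxu) /seeded inE xpair_eqE (negbTE Hxu) /=.
have -> : [exists v, [&& E x v, lam x v == s.+1 &
          infectious_at delta (itime E lam delta [:: (u, s)] s) v s.+1]] =
          E x u && (lam x u == s.+1).
  apply/existsP/idP.
    move=> [w /and3P [Hw Hl Hi]].
    move: Hi; rewrite /infectious_at itime_before // eqxx /=.
    by case: eqP => [Ewu|] //; subst w; rewrite Hw Hl.
  move=> /andP [H1 H2]; exists u; rewrite H1 H2 /infectious_at itime_before //.
  by rewrite !eqxx /= ltnSn /=; lia.
by [].
Qed.

Lemma key Tmax delta lam (u v : V) j L : 0 < delta -> v != u -> j < Tmax ->
  valid_log E Tmax delta lam [:: (u, j)] L ->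
  (if L v is Some (_, t') then t' == j.+1 else false) = E v u && (lam v u == j.+1).
Proof.
move=> Hd Hvu Hj HL; move: (HL v).
have Hsd : forall a, seeded [:: (u, j)] v a = false.
  by move=> a; rewrite /seeded inE xpair_eqE (negbTE Hvu).
case Hc: (E v u && (lam v u == j.+1)).
  have Hi : itime E lam delta [:: (u, j)] j.+1 v = Some j.+1 by rewrite itime_next // Hc.
  have := @itime_mono lam delta _ _ (Tmax - j.+1) _ _ Hi; rewrite subnKC // => ->.
  rewrite /= Hsd => -[w [-> _]] /=; exact: eqxx.
case Ht: (itime E lam delta [:: (u, j)] Tmax v) => [a|]; last by move=> ->.
rewrite /= Hsd => -[w [-> _]] /=.
apply/negbTE/eqP => Ha; subst a.
have := @itime_down lam delta _ _ _ _ _ Ht (leqnn _) Hj.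
by rewrite itime_next // Hc.
Qed.

End Aux.

Definition the_st (V : finType) (Tmax : nat) : strategy V := fun hs =>
  if size hs %% Tmax < Tmax then
    [seq (x, size hs %% Tmax) | x <- take 1 (drop (size hs %/ Tmax) (enum V))]
  else [::].

Definition the_g (V : finType) (Tmax : nat) : guesser V := fun hs u v =>
  (find (fun j => if nth (fun _ => None) hs (index u (enum V) * Tmax + j) v
                  is Some (_, t') then t' == j.+1 else false) (iota 0 Tmax)).+1.

Theorem mainTheorem4 (V : finType) (E : rel V) (Tmax delta k : nat) :
  symmetric E -> irreflexive E -> 0 < delta -> 0 < k ->
  exists (st : strategy V) (g : guesser V),
    wins_in E Tmax delta k (#|V| * Tmax) st g.
Proof.
move=> Hsym Hirr Hd Hk.
exists (the_st V Tmax), (the_g V Tmax); split.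
  move=> hs; rewrite /the_st; case: ifP => Hlt; last by split.
  split.
    rewrite size_map size_take; case: (drop _ _) => //= ? ?.
    by case: ifP => H; lia.
  move=> p /mapP [x _ ->] /=; exact: ltnW.
move=> hs lam Hsz Hlam Hcons u v Huv.
have [Hsy /andP [H1 HT]] := Hlam u v Huv.
have HTp : 0 < Tmax by apply: leq_trans H1 HT.
have Hvu : v != u by apply/eqP => Hvu; subst v; rewrite Hirr in Huv.
have Hvu' : E v u by rewrite Hsym.
have Hiu : index u (enum V) < #|V| by rewrite cardE index_mem mem_enum.
rewrite /the_g.
set P := (fun j : nat => _).
have HP : {in iota 0 Tmax, P =1 pred1 (lam u v).-1}.
  move=> j; rewrite mem_iota add0n => /andP [_ Hj].
  set i := index u (enum V) * Tmax + j.
  have Hi : i < size hs.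
    rewrite Hsz /i.
    apply: (@leq_trans (index u (enum V) * Tmax + Tmax)); first by rewrite ltn_add2l.
    by rewrite addnC -mulSn leq_mul2r Hiu orbT.
  have := Hcons i Hi.
  have -> : the_st V Tmax (take i hs) = [:: (u, j)].
    rewrite /the_st size_take Hi /i modnMDl (modn_small Hj) Hj divnMDl // divn_small // addn0.
    rewrite (drop_nth u); last by rewrite -cardE.
    by rewrite /= take0 nth_index ?mem_enum.
  move=> HL; rewrite /P -/i (@key V E Tmax delta lam u v j _ Hd Hvu Hj HL) Hvu' /= -Hsy /=.
  apply/eqP/eqP; lia.
rewrite (eq_in_find HP) -/(index _ _).
have -> : (lam u v).-1 = nth 0 (iota 0 Tmax) (lam u v).-1 by rewrite nth_iota //; lia.
rewrite index_uniq ?iota_uniq ?size_iota; lia.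
Qed.
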